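(* Let $N$ be a nontrivial normal subgroup of $G_2$. If $\phi(N)$ is trivial, then $N=K$.
   Context: The $2\times2\times2$ Rubik's cube consists of 8 corner cubelets, each carrying 3 colored stickers. Corner positions are numbered 1 = top-front-left, 2 = top-front-right, 3 = top-back-left, 4 = top-back-right, 5 = bottom-front-left, 6 = bottom-front-right, 7 = bottom-back-left, 8 = bottom-back-right. $G_2$ is the subgroup of the symmetric group on the 24 stickers generated by the six moves $u,d,f,b,l,r$ rotating respectively the top, bottom, front, back, left, right layer of four cubelets by $90^\circ$ clockwise as seen from outside facing that face. $\phi:G_2\to S_8$ records the permutation of corner positions, and $K=\ker\phi$. *)

(* Defs.v *)
From mathcomp Require Import all_boot all_fingroup.
Set Implicit Arguments. Unset Strict Implicit. Unset Printing Implicit Defensive.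

(* Right-handed frame: axis 0 = x (true = Right, false = Left),        *)
(*                     axis 1 = y (true = Up/top, false = Down/bottom),*)
(*                     axis 2 = z (true = Front, false = Back).        *)
(* A sticker (location) is a corner position together with the axis of *)
(* the face it lies on (the sign of that face is the corner's          *)
(* coordinate along that axis): 8 * 3 = 24 stickers.                   *)

Definition corner := (bool * bool * bool)%type.
Definition sticker := (corner * 'I_3)%type.

Definition corner1 : corner := (false, true, true).
Definition corner2 : corner := (true, true, true).
Definition corner3 : corner := (false, true, false).
Definition corner4 : corner := (true, true, false).
Definition corner5 : corner := (false, false, true).
Definition corner6 : corner := (true, false, true).
Definition corner7 : corner := (false, false, false).
Definition corner8 : corner := (true, false, false).

Definition coord (c : corner) (m : 'I_3) : bool :=
  let: (x, y, z) := c in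
  if val m == 0 then x else if val m == 1 then y else z.

Definition axis_x : 'I_3 := @Ordinal 3 0 isT.
Definition axis_y : 'I_3 := @Ordinal 3 1 isT.
Definition axis_z : 'I_3 := @Ordinal 3 2 isT.

Definition mkcorner (f : 'I_3 -> bool) : corner :=
  (f axis_x, f axis_y, f axis_z).

Definition nxt (k : 'I_3) : 'I_3 :=
  match val k with 0 => axis_y | 1 => axis_z | _ => axis_x end.

(* The quarter turn, clockwise as seen from outside, of the layer of   *)
(* the four cubelets whose coordinate along axis k equals s.  Writing  *)
(* (k, i, j) for the cyclic order of the axes, clockwise seen from the *)
(* outside of the face with outward normal +e_k is the rotation by     *)
(* -90 degrees about e_k:  new_i = old_j, new_j = - old_i; for the     *)
(* face with outward normal -e_k it is new_i = - old_j, new_j = old_i. *)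
Definition turn_fun (k : 'I_3) (s : bool) (st : sticker) : sticker :=
  let: (c, a) := st in
  if coord c k != s then st else
  let i := nxt k in let j := nxt i in
  let c' := mkcorner (fun m =>
      if m == i then (if s then coord c j else ~~ coord c j)
      else if m == j then (if s then ~~ coord c i else coord c i)
      else coord c m) in
  let a' := if a == i then j else if a == j then i else a in
  (c', a').

Lemma turn_fun4 k s x :
  turn_fun k s (turn_fun k s (turn_fun k s (turn_fun k s x))) == x.
Proof.
case: x => [[[x y] z] [a Ha]].
case: k => [[|[|[|k]]] Hk] //;
case: a Ha => [|[|[|a]]] Ha //; by case: x; case: y; case: z; case: s.
Qed.

Lemma turn_fun_inj k s : injective (turn_fun k s).
Proof.
apply: (can_inj (g := fun x => turn_fun k s (turn_fun k s (turn_fun k s x)))).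
by move=> x; apply/eqP; apply: turn_fun4.
Qed.

Definition turn k s : {perm sticker} := perm (@turn_fun_inj k s).


Definition mv_u := turn axis_y true.
Definition mv_d := turn axis_y false.
Definition mv_f := turn axis_z true.
Definition mv_b := turn axis_z false.
Definition mv_l := turn axis_x false.
Definition mv_r := turn axis_x true.

Definition G2 : {group {perm sticker}} :=
  <<[set mv_u; mv_d; mv_f; mv_b; mv_l; mv_r]>>%G.

(* phi : permutation of the corner positions induced by g: the cubelet *)
(* at position c is sent to position phi g c (all three stickers of a  *)
(* cubelet move together for g in G2, so the choice of sticker (c, 0)  *)
(* is immaterial there).                                               *)
Definition phi (g : {perm sticker}) : {ffun corner -> corner} :=
  [ffun c => (g (c, ord0)).1].

Definition phi_id : {ffun corner -> corner} := [ffun c => c].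

Definition K : {set {perm sticker}} := [set g in G2 | phi g == phi_id].

(* Main.v *)
Require Import Defs.
From mathcomp Require Import all_boot all_fingroup.
From mathcomp Require Import zify.
Set Implicit Arguments. Unset Strict Implicit. Unset Printing Implicit Defensive.

Definition par (c : corner) : bool := let: (x, y, z) := c in addb x (addb y z).

Definition rho_fun (x : sticker) : sticker :=
  (x.1, @Ordinal 3 ((x.2 + (if par x.1 then 1 else 2)) %% 3) (@ltn_pmod _ 3 isT)).

Lemma rho_fun3 x : rho_fun (rho_fun (rho_fun x)) == x.
Proof.
case: x => [[[x y] z] [a Ha]].
case: a Ha => [|[|[|a]]] Ha //; by case: x; case: y; case: z.
Qed.

Lemma turn_rho k s x : turn_fun k s (rho_fun x) == rho_fun (turn_fun k s x).
Proof.
case: x => [[[x y] z] [a Ha]].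
case: k => [[|[|[|k]]] Hk] //;
case: a Ha => [|[|[|a]]] Ha //; by case: x; case: y; case: z; case: s.
Qed.



Lemma sumc (F : corner -> nat) : \sum_(c : corner) F c =
  F corner1 + F corner2 + F corner3 + F corner4 + F corner5 + F corner6 + F corner7 + F corner8.
Proof.
rewrite (eq_bigr (fun p : corner => F (p.1, p.2))); last by case.
rewrite -(pair_big xpredT xpredT (fun a b => F (a, b))) /=.
rewrite (eq_bigr (fun p : bool * bool => \sum_(j : bool) F ((p.1, p.2), j))); last by case.
rewrite -(pair_big xpredT xpredT (fun a b => \sum_(j : bool) F ((a, b), j))) /=.
rewrite !big_bool /=.
rewrite /corner1 /corner2 /corner3 /corner4 /corner5 /corner6 /corner7 /corner8. lia.
Qed.

Lemma rho_inj : injective rho_fun.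
Proof.
apply: (can_inj (g := fun x => rho_fun (rho_fun x))).
by move=> x; apply/eqP; apply: rho_fun3.
Qed.

Definition rho : {perm sticker} := perm rho_inj.

Definition ori (x : sticker) : nat :=
  if par x.1 then val x.2 else (2 * val x.2) %% 3.

Lemma rho_corner x : (rho x).1 = x.1.
Proof. by rewrite permE. Qed.

Lemma rho_ori x : ori (rho x) = (ori x).+1 %% 3.
Proof.
rewrite permE.
case: x => [[[x y] z] [a Ha]].
case: a Ha => [|[|[|a]]] Ha //; by case: x; case: y; case: z.
Qed.

Lemma ori_lt x : ori x < 3.
Proof. rewrite /ori; case: ifP => _; [exact: ltn_ord | exact: ltn_pmod]. Qed.

Lemma ori0 c : ori (c, ord0) = 0.
Proof. by rewrite /ori /=; case: ifP. Qed.


Local Open Scope group_scope.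

Lemma rhoX_corner n x : ((rho ^+ n) x).1 = x.1.
Proof. rewrite permX; elim: n => //= n IH; by rewrite rho_corner. Qed.

Lemma rhoX_ori n x : ori ((rho ^+ n) x) = (ori x + n) %% 3.
Proof.
rewrite permX; elim: n => /= [|n IH]; first by rewrite addn0 modn_small ?ori_lt.
rewrite rho_ori IH. lia.
Qed.

Lemma rhoX_ori_base x : (rho ^+ (ori x)) (x.1, ord0) = x.
Proof.
rewrite permX.
case: x => [[[x y] z] [a Ha]].
case: a Ha => [|[|[|a]]] Ha //; case: x; case: y; case: z; rewrite /= ?permE;
  by apply/eqP.
Qed.

Lemma sticker_eq x y : x.1 = y.1 -> ori x = ori y -> x = y.
Proof.
move=> H1 H2; by rewrite -[x]rhoX_ori_base -[y]rhoX_ori_base H1 H2.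
Qed.

Lemma rhoX_mod n : rho ^+ n = rho ^+ (n %% 3).
Proof.
apply/permP => x; apply: sticker_eq; first by rewrite !rhoX_corner.
rewrite !rhoX_ori. lia.
Qed.

Lemma turn_cent k s : turn k s \in 'C[rho].
Proof.
apply/cent1P; apply/permP => x; rewrite !permM /turn /rho !permE.
by apply/esym/eqP/turn_rho.
Qed.

Lemma G2_cent : G2 \subset 'C[rho].
Proof.
rewrite gen_subG; apply/subsetP => x H; rewrite !inE in H; repeat (case/orP: H => H); move/eqP: H => ->;
rewrite /mv_u /mv_d /mv_f /mv_b /mv_l /mv_r; apply: turn_cent.
Qed.

Lemma cent_rhoX h n x : h \in 'C[rho] -> h ((rho ^+ n) x) = (rho ^+ n) (h x).
Proof.
move=> /cent1P Hc; have C := commuteX n Hc.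
by rewrite -!permM C.
Qed.

Definition sig (h : {perm sticker}) c := (h (c, ord0)).1.
Definition ex (h : {perm sticker}) c := ori (h (c, ord0)).

Lemma cent_decomp h x : h \in 'C[rho] -> h x = (rho ^+ ori x) (h (x.1, ord0)).
Proof. by move=> Hh; rewrite -(cent_rhoX _ _ Hh) rhoX_ori_base. Qed.

Lemma cent_corner h x : h \in 'C[rho] -> (h x).1 = sig h x.1.
Proof. by move=> Hh; rewrite cent_decomp // rhoX_corner. Qed.

Lemma cent_ori h x : h \in 'C[rho] -> ori (h x) = (ori x + ex h x.1) %% 3.
Proof. by move=> Hh; rewrite cent_decomp // rhoX_ori addnC. Qed.

Lemma ex_mul h1 h2 c : h2 \in 'C[rho] ->
  ex (h1 * h2) c = (ex h1 c + ex h2 (sig h1 c)) %% 3.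
Proof. by move=> H2; rewrite /ex permM cent_ori. Qed.

Lemma sig_inj h : h \in 'C[rho] -> injective (sig h).
Proof.
move=> Hh; have Hi : h^-1 \in 'C[rho] by rewrite groupV.
apply: (can_inj (g := sig h^-1)) => d.
by rewrite [sig h d]/sig -(cent_corner _ Hi) permK.
Qed.

Definition S h := (\sum_(c : corner) ex h c)%N.

Lemma S_mul h1 h2 : h1 \in 'C[rho] -> h2 \in 'C[rho] ->
  S (h1 * h2) = S h1 + S h2 %[mod 3].
Proof.
move=> H1 H2; rewrite /S (eq_bigr (fun c => (ex h1 c + ex h2 (sig h1 c)) %% 3)%N);
  last by move=> c _; rewrite ex_mul.
rewrite (@modn_summ corner (index_enum corner) xpredT (fun c => (ex h1 c + ex h2 (sig h1 c))%N) 3).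
rewrite big_split /=.
by rewrite [X in _ = _ + X %[mod 3]](reindex_inj (sig_inj H1)).
Qed.

Definition Zs := [set h | (h \in 'C[rho]) && (S h %% 3 == 0)%N].

Lemma Zs_group : group_set Zs.
Proof.
apply/group_setP; split.
  rewrite inE group1 /= /S big1 // => c _.
  by rewrite /ex perm1 ori0.
move=> x y; rewrite [x \in _]inE [y \in _]inE [_ * _ \in _]inE => /andP[Hx /eqP Sx] /andP[Hy /eqP Sy].
rewrite groupM //=; apply/eqP; rewrite S_mul //. lia.
Qed.

Canonical Zs_g := Group Zs_group.

Lemma G2_Zs : G2 \subset Zs.
Proof.
rewrite gen_subG; apply/subsetP => x H; rewrite !inE in H.
repeat (case/orP: H => H); move/eqP: H => ->; rewrite inE;
rewrite /S sumc /ex /mv_u /mv_d /mv_f /mv_b /mv_l /mv_r;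
(apply/andP; split; [apply: turn_cent | rewrite /turn !permE; by []]).
Qed.

Definition twf (t : corner -> nat) (x : sticker) : sticker := (rho ^+ t x.1) x.

Lemma twf_inj t : injective (twf t).
Proof.
move=> x y; rewrite /twf => E.
have Hc : x.1 = y.1 by rewrite -(rhoX_corner (t x.1) x) E rhoX_corner.
by move: E; rewrite Hc; apply: perm_inj.
Qed.

Definition tw t : {perm sticker} := perm (@twf_inj t).

Lemma twE t x : tw t x = (rho ^+ t x.1) x.
Proof. by rewrite permE. Qed.

Lemma tw_ext t t' : (forall c, t c = t' c %[mod 3]) -> tw t = tw t'.
Proof.
move=> H; apply/permP => x; by rewrite !twE rhoX_mod (rhoX_mod (t' _)) H.
Qed.

Lemma tw_mul t t' : tw t * tw t' = tw (fun c => t c + t' c)%N.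
Proof.
apply/permP => x; rewrite permM !twE rhoX_corner.
by rewrite expgD permM.
Qed.

Lemma tw0 : tw (fun _ => 0%N) = 1.
Proof. by apply/permP => x; rewrite twE expg0 perm1. Qed.

Lemma tw_exp t n : tw t ^+ n = tw (fun c => n * t c)%N.
Proof.
elim: n => [|n IH]; first by rewrite expg0 -tw0.
rewrite expgS IH tw_mul; apply: tw_ext => c; by rewrite mulSn.
Qed.

Lemma tw_conj t h : h \in 'C[rho] -> (tw t) ^ h = tw (fun c => t (sig h^-1 c)).
Proof.
move=> Hh; have Hi : h^-1 \in 'C[rho] by rewrite groupV.
apply/permP => x; rewrite conjgE !permM twE cent_rhoX // permKV twE.
by rewrite cent_corner.
Qed.

Lemma K_tw g : g \in K -> g = tw (ex g) /\ (S g %% 3 = 0)%N.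
Proof.
rewrite inE => /andP[gG /eqP Hp].
have /setIdP[gC /eqP Sg] : g \in Zs by apply: (subsetP G2_Zs).
split=> //.
have Hs : forall c, sig g c = c.
  move=> c; have := congr1 (fun f : {ffun corner -> corner} => f c) Hp.
  by rewrite /phi /phi_id !ffunE.
apply/permP => x; apply: sticker_eq.
  by rewrite cent_corner // Hs twE rhoX_corner.
by rewrite cent_ori // twE rhoX_ori.
Qed.

Definition W (k : corner) : {perm sticker} :=
  match k with
  | (true, true, true) => mv_u * mv_l * mv_f * mv_d * mv_b
  | (false, true, false) => mv_u * mv_f * mv_d * mv_b * mv_l
  | (true, true, false) => mv_u * mv_f * mv_f * mv_l * mv_f * mv_f * mv_d * mv_f * mv_b
  | (false, false, true) => mv_f * mv_u * mv_l * mv_b * mv_r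
  | (true, false, true) => mv_u * mv_u * mv_u * mv_f * mv_u * mv_f * mv_r * mv_b * mv_d
  | (false, false, false) => mv_u * mv_u * mv_f * mv_l * mv_l * mv_d * mv_b * mv_b * mv_r
  | (true, false, false) => mv_u * mv_u * mv_f * mv_l * mv_b * mv_u * mv_r * mv_u * mv_u
  | _ => 1
  end.

Definition tau (k c : corner) : corner :=
  if c == corner1 then k else if c == k then corner1 else c.

Lemma mv_G2 : mv_u \in G2 /\ mv_d \in G2 /\ mv_f \in G2 /\ mv_b \in G2 /\ mv_l \in G2 /\ mv_r \in G2.
Proof. by repeat split; apply: mem_gen; rewrite !inE eqxx ?orbT. Qed.

Lemma W_G2 k : W k \in G2.
Proof.
case: mv_G2 => Hu [Hd [Hf [Hb [Hl Hr]]]].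
by case: k => [[[] []] []]; rewrite /W ?group1 // !groupM.
Qed.

Lemma W_sig k c : sig (W k) c = tau k c.
Proof.
case: k => [[[] []] []]; case: c => [[[] []] []];
rewrite /sig /W ?perm1 ?permM /mv_u /mv_d /mv_f /mv_b /mv_l /mv_r /turn ?permE; by [].
Qed.

Definition Bv (k c : corner) : nat :=
  if c == corner1 then 2%N else if c == k then 1%N else 0%N.

Lemma B_conj3 k j c : k != corner1 -> j != corner1 -> j != k ->
  Bv k (tau k (tau j (tau k c))) = Bv j c.
Proof.
by case: k => [[[] []] []]; case: j => [[[] []] []]; case: c => [[[] []] []].
Qed.

Theorem proposition2p7 (N : {group {perm sticker}}) :
  (N <| G2)%g -> (N :!=: 1)%g ->
  (forall g, g \in N -> phi g = phi_id) ->
  (N :=: K)%g.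
Proof.
move=> nNG ntN Hphi.
have sNG : N \subset G2 by case/andP: nNG.
have nN : forall x y, x \in N -> y \in G2 -> x ^ y \in N.
  move=> x y xN yG; rewrite memJ_norm //; exact: (subsetP (normal_norm nNG)).
have nW : forall x k, x \in N -> x ^ (W k)^-1 \in N.
  by move=> x k xN; apply: nN; rewrite // groupV W_G2.
have Wc : forall k, (W k)^-1 \in 'C[rho].
  by move=> k; rewrite groupV (subsetP G2_cent) ?W_G2.
have conjW : forall t k, (tw t) ^ (W k)^-1 = tw (fun c => t (tau k c)).
  move=> t k; rewrite tw_conj ?Wc //; apply: tw_ext => c; by rewrite invgK W_sig.
have sNK : N \subset K.
  apply/subsetP => x xN; rewrite inE (subsetP sNG) //=; by rewrite Hphi.
apply/eqP; rewrite eqEsubset sNK /=.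
case/trivgPn: ntN => g gN ng1.
have [Eg Sg] := K_tw (subsetP sNK g gN).
move: Sg; rewrite /S sumc => Sg.
set t := ex g in Eg Sg; clearbody t.
have [k Hk] : exists k, (t k %% 3 != t corner1 %% 3)%N.
  apply/existsP; apply: contraR ng1; rewrite negb_exists => /forallP H.
  have H' : forall c, (t c %% 3 = t corner1 %% 3)%N.
    by move=> c; apply/eqP; move: (H c); rewrite negbK.
  rewrite Eg -tw0; apply/eqP; apply: tw_ext => c.
  have := H' c; have := H' corner2; have := H' corner3; have := H' corner4;
  have := H' corner5; have := H' corner6; have := H' corner7; have := H' corner8.
  clear -Sg; lia.
have Hk1 : k != corner1 by apply: contraNneq Hk => ->.
have BkN : tw (Bv k) \in N.
  have h1 : tw t * (tw t ^ (W k)^-1) ^+ 2 \in N by rewrite -Eg; apply: groupM => //; apply: groupX; apply: nW.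
  rewrite conjW tw_exp tw_mul in h1.
  set m := if ((t corner1 + 2 * t k) %% 3 == 1)%N then 2%N else 1%N.
  have := groupX m h1; rewrite tw_exp.
  have -> // : tw (fun c => m * (t c + 2 * t (tau k c)))%N = tw (Bv k).
  apply: tw_ext => c; rewrite /Bv /tau.
  move/eqP: Hk => Hk.
  case: eqP => [->|Hc1]; first by rewrite /m; case: ifP => /eqP; clear -Hk; lia.
  case: eqP => [->|Hck]; first by rewrite /m; case: ifP => /eqP; clear -Hk; lia.
  by rewrite /m; case: ifP => _; clear; lia.
have BN : forall j, j != corner1 -> tw (Bv j) \in N.
  move=> j Hj; case: (eqVneq j k) => [->//|Hjk].
  have := nW _ k (nW _ j (nW _ k BkN)); rewrite !conjW.
  have -> // : tw (fun c => Bv k (tau k (tau j (tau k c)))) = tw (Bv j).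
  by apply: tw_ext => c; rewrite B_conj3.
apply/subsetP => x xK.
have [Ex Sx] := K_tw xK.
move: Sx; rewrite /S sumc => Sx.
set s := ex x in Ex Sx; clearbody s.
have -> : x = tw (Bv corner2) ^+ s corner2 * tw (Bv corner3) ^+ s corner3 *
              tw (Bv corner4) ^+ s corner4 * tw (Bv corner5) ^+ s corner5 *
              tw (Bv corner6) ^+ s corner6 * tw (Bv corner7) ^+ s corner7 *
              tw (Bv corner8) ^+ s corner8.
  rewrite Ex !tw_exp !tw_mul; apply: tw_ext => c.
  rewrite /corner1 /corner2 /corner3 /corner4 /corner5 /corner6 /corner7 /corner8 in Sx *.
  case: c => [[[] []] []]; rewrite /Bv /= ?muln0 ?muln1 ?addn0 ?add0n; clear -Sx; lia.
by rewrite !groupM ?groupX // BN.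
Qed.
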